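(* Let $(V,\nu)$ and $(W,\omega)$ be matrix gauge spaces with $\mathbb{C}$-proper matrix gauges, and let $(V,V_{ac},h)$ and $(W,W_{ac},h')$ be the induced triples, i.e. $V_{ac}^n=\{x:\nu_n(-x)=0\}$, $h_n(x)=\max\{\nu_n(x),\nu_n(-x)\}$, and similarly for $W$ with $\omega$. Let $\phi:V\to W$ be linear. (i) If $\phi$ is completely gauge contractive (i.e. $\omega_n(\phi^{(n)}(x))\le\nu_n(x)$ for all $n$ and $x\in M_n(V)$), then $\phi$ is real-cpcc. (ii) If $\phi$ is real-cpcc, then $\omega_n(\phi^{(n)}(x))\le\nu_{max}^n(x)$ for all $n$ and $x\in M_n(V)$, where $\nu_{max}^n(x)=\inf\{h_n(x+p):p\in V_{ac}^n\}$.
   Context: For a complex vector space $V$, $M_n(V)$ is the $n\times n$ matrices over $V$ and $\phi^{(n)}$ is the entrywise application of a linear map $\phi$. A matrix gauge is a sequence $\{\nu_n:M_n(V)\to[0,\infty)\}$ with $\nu_n(x+y)\le\nu_n(x)+\nu_n(y)$, $\nu_n(tx)=t\nu_n(x)$ ($t\ge0$), $\nu_k(X^*AX)\le\|X\|^2\nu_n(A)$ for scalar $X\in M_{n,k}$, and $\nu_{n+m}(A\oplus B)=\max\{\nu_n(A),\nu_m(B)\}$; it is $\mathbb{C}$-proper if $\nu_1(i^kz)=0$ for $k=0,1,2,3$ implies $z=0$. A linear map $\phi:V\to W$ is real-completely positive if $\phi^{(n)}(V_{ac}^n)\subseteq W_{ac}^n$ for all $n$, real-completely contractive if $h'_n(\phi^{(n)}(x))\le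 h_n(x)$ for all $n,x$, and real-cpcc if it is both. *)

(* Defs.v *)
From mathcomp Require Import ssreflect ssrfun ssrbool eqtype ssrnat seq fintype bigop.
From Stdlib Require Import Reals Classical ClassicalEpsilon.
Set Implicit Arguments.
Unset Strict Implicit.
Unset Printing Implicit Defensive.
Open Scope R_scope.

Record C := mkC { Cre : R; Cim : R }.
Definition C0 : C := mkC 0 0.
Definition C1 : C := mkC 1 0.
Definition Ci : C := mkC 0 1.
Definition Cadd (a b : C) : C := mkC (Cre a + Cre b) (Cim a + Cim b).
Definition Cmul (a b : C) : C :=
  mkC (Cre a * Cre b - Cim a * Cim b) (Cre a * Cim b + Cim a * Cre b).
Definition Cconj (a : C) : C := mkC (Cre a) (- Cim a).
Definition RtoC (t : R) : C := mkC t 0.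
Definition Cnorm2 (a : C) : R := Cre a * Cre a + Cim a * Cim a.

Record CVS := {
  vT :> Type;
  vadd : vT -> vT -> vT;
  vzero : vT;
  vopp : vT -> vT;
  vscal : C -> vT -> vT;
  vaddA : forall x y z, vadd x (vadd y z) = vadd (vadd x y) z;
  vaddC : forall x y, vadd x y = vadd y x;
  vadd0 : forall x, vadd x vzero = x;
  vaddN : forall x, vadd x (vopp x) = vzero;
  vscalDv : forall a x y, vscal a (vadd x y) = vadd (vscal a x) (vscal a y);
  vscalDs : forall a b x, vscal (Cadd a b) x = vadd (vscal a x) (vscal b x);
  vscalA : forall a b x, vscal a (vscal b x) = vscal (Cmul a b) x;
  vscal1 : forall x, vscal C1 x = x
}.

Definition is_linear (V W : CVS) (phi : V -> W) : Prop :=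
  (forall x y, phi (vadd x y) = vadd (phi x) (phi y)) /\
  (forall (a : C) x, phi (vscal a x) = vscal a (phi x)).

Definition Mat (V : Type) (n m : nat) := 'I_n -> 'I_m -> V.

Definition madd (V : CVS) n m (A B : Mat V n m) : Mat V n m :=
  fun i j => vadd (A i j) (B i j).
Definition mopp (V : CVS) n m (A : Mat V n m) : Mat V n m :=
  fun i j => vopp (A i j).
Definition mrscal (V : CVS) n m (t : R) (A : Mat V n m) : Mat V n m :=
  fun i j => vscal (RtoC t) (A i j).
Definition mapm (V W : CVS) (phi : V -> W) n m (A : Mat V n m) : Mat W n m :=
  fun i j => phi (A i j).

(* X^* A X for a scalar matrix X in M_{n,k}(C) and A in M_n(V) *)
Definition cmpl (V : CVS) n k (X : 'I_n -> 'I_k -> C) (A : Mat V n n) : Mat V k k :=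
  fun i j => \big[@vadd V/vzero V]_(p < n) \big[@vadd V/vzero V]_(q < n)
                vscal (Cmul (Cconj (X p i)) (X q j)) (A p q).

Definition dsum (V : CVS) n m (A : Mat V n n) (B : Mat V m m) : Mat V (n + m)%nat (n + m)%nat :=
  fun i j => match fintype.split i, fintype.split j with
             | inl a, inl b => A a b
             | inr a, inr b => B a b
             | _, _ => vzero V
             end.

Definition cvnorm k (v : 'I_k -> C) : R := sqrt (\big[Rplus/0]_(i < k) Cnorm2 (v i)).
Definition cmatvec n k (X : 'I_n -> 'I_k -> C) (v : 'I_k -> C) : 'I_n -> C :=
  fun p => \big[Cadd/C0]_(j < k) Cmul (X p j) (v j).
Definition opnorm n k (X : 'I_n -> 'I_k -> C) : R :=
  epsilon (inhabits 0)
    (fun t => is_lub (fun r => exists v, cvnorm v <= 1 /\ r = cvnorm (cmatvec X v)) t).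

Definition is_matrix_gauge (V : CVS) (nu : forall n, Mat V n n -> R) : Prop :=
  (forall n (x : Mat V n n), (0 < n)%nat -> 0 <= nu n x) /\
  (forall n (x y : Mat V n n), (0 < n)%nat -> nu n (madd x y) <= nu n x + nu n y) /\
  (forall n (t : R) (x : Mat V n n), (0 < n)%nat -> 0 <= t -> nu n (mrscal t x) = t * nu n x) /\
  (forall n k (X : 'I_n -> 'I_k -> C) (A : Mat V n n), (0 < n)%nat -> (0 < k)%nat ->
      nu k (cmpl X A) <= (opnorm X) ^ 2 * nu n A) /\
  (forall n m (A : Mat V n n) (B : Mat V m m), (0 < n)%nat -> (0 < m)%nat ->
      nu (n + m)%nat (dsum A B) = Rmax (nu n A) (nu m B)).

Definition m1 (V : CVS) (z : V) : Mat V 1 1 := fun _ _ => z.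

Definition C_proper (V : CVS) (nu : forall n, Mat V n n -> R) : Prop :=
  forall z : V,
    nu 1%nat (m1 z) = 0 -> nu 1%nat (m1 (vscal Ci z)) = 0 ->
    nu 1%nat (m1 (vscal (Cmul Ci Ci) z)) = 0 ->
    nu 1%nat (m1 (vscal (Cmul Ci (Cmul Ci Ci)) z)) = 0 -> z = vzero V.

Definition Vac (V : CVS) (nu : forall n, Mat V n n -> R) n (x : Mat V n n) : Prop :=
  nu n (mopp x) = 0.
Definition hnorm (V : CVS) (nu : forall n, Mat V n n -> R) n (x : Mat V n n) : R :=
  Rmax (nu n x) (nu n (mopp x)).

Definition is_glb (S : R -> Prop) (m : R) : Prop :=
  (forall s, S s -> m <= s) /\ (forall b, (forall s, S s -> b <= s) -> b <= m).
Definition nu_max (V : CVS) (nu : forall n, Mat V n n -> R) n (x : Mat V n n) : R :=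
  epsilon (inhabits 0)
    (is_glb (fun r => exists p : Mat V n n, Vac nu p /\ r = hnorm nu (madd x p))).

Definition completely_gauge_contractive (V W : CVS) (nu : forall n, Mat V n n -> R)
  (om : forall n, Mat W n n -> R) (phi : V -> W) : Prop :=
  forall n (x : Mat V n n), (0 < n)%nat -> om n (mapm phi x) <= nu n x.

Definition real_cp (V W : CVS) (nu : forall n, Mat V n n -> R)
  (om : forall n, Mat W n n -> R) (phi : V -> W) : Prop :=
  forall n (x : Mat V n n), (0 < n)%nat -> Vac nu x -> Vac om (mapm phi x).

Definition real_cc (V W : CVS) (nu : forall n, Mat V n n -> R)
  (om : forall n, Mat W n n -> R) (phi : V -> W) : Prop :=
  forall n (x : Mat V n n), (0 < n)%nat -> hnorm om (mapm phi x) <= hnorm nu x.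

Definition real_cpcc (V W : CVS) (nu : forall n, Mat V n n -> R)
  (om : forall n, Mat W n n -> R) (phi : V -> W) : Prop :=
  real_cp nu om phi /\ real_cc nu om phi.

(* Main.v *)
Require Import Defs.
From mathcomp Require Import ssreflect ssrfun ssrbool eqtype ssrnat seq fintype bigop.
From Stdlib Require Import Reals Lra ClassicalEpsilon FunctionalExtensionality.
Open Scope R_scope.

Lemma vadd_cancel (V : CVS) (a b c : V) : vadd a b = vadd a c -> b = c.
Proof.
move=> H.
have: vadd (vopp a) (vadd a b) = vadd (vopp a) (vadd a c) by rewrite H.
by rewrite !vaddA (vaddC (vopp a) a) vaddN !(vaddC (vzero V)) !vadd0.
Qed.

Lemma lin0 (V W : CVS) (phi : V -> W) : is_linear phi -> phi (vzero V) = vzero W.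
Proof.
move=> [Ha _]; apply: (@vadd_cancel W (phi (vzero V))).
by rewrite -Ha !vadd0.
Qed.

Lemma linN (V W : CVS) (phi : V -> W) v : is_linear phi -> phi (vopp v) = vopp (phi v).
Proof.
move=> L; apply: (@vadd_cancel W (phi v)).
by rewrite vaddN -(proj1 L) vaddN lin0.
Qed.

Lemma matext (V : Type) n m (A B : Mat V n m) : (forall i j, A i j = B i j) -> A = B.
Proof.
move=> H; apply: functional_extensionality => i; apply: functional_extensionality => j.
exact: H.
Qed.

Lemma mapmN (V W : CVS) (phi : V -> W) n (x : Mat V n n) : is_linear phi ->
  mapm phi (mopp x) = mopp (mapm phi x).
Proof. move=> L; apply: matext => i j; rewrite /mapm /mopp linN //. Qed.

Definition Z (V : CVS) n : Mat V n n := fun _ _ => vzero V.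

Lemma nuZ (V : CVS) (nu : forall n, Mat V n n -> R) n : is_matrix_gauge nu -> (0 < n)%nat ->
  nu n (Z V n) = 0.
Proof.
move=> [_ [_ [Hs _]]] Hn.
have E : mrscal 0 (Z V n) = Z V n.
  apply: matext => i j; rewrite /mrscal /Z.
  apply: (@vadd_cancel V (vscal (RtoC 0) (vzero V))).
  by rewrite -vscalDv !vadd0.
rewrite -E Hs //; lra.
Qed.

Lemma moppZ (V : CVS) n : mopp (Z V n) = Z V n.
Proof.
apply: matext => i j; rewrite /mopp /Z.
apply: (@vadd_cancel V (vzero V)).
by rewrite vaddN vadd0.
Qed.

Lemma madd_split (V W : CVS) (phi : V -> W) n (x p : Mat V n n) : is_linear phi ->
  mapm phi x = madd (mapm phi (madd x p)) (mapm phi (mopp p)).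
Proof.
move=> L; apply: matext => i j; rewrite /mapm /madd /mopp -(proj1 L).
by rewrite -vaddA vaddN vadd0.
Qed.

Theorem proposition6p1 (V W : CVS) (nu : forall n, Mat V n n -> R)
  (om : forall n, Mat W n n -> R) (phi : V -> W) :
  is_matrix_gauge nu -> C_proper nu ->
  is_matrix_gauge om -> C_proper om ->
  is_linear phi ->
  (completely_gauge_contractive nu om phi -> real_cpcc nu om phi) /\
  (real_cpcc nu om phi ->
     forall n (x : Mat V n n), (0 < n)%nat -> om n (mapm phi x) <= nu_max nu x).
Proof.
move=> Gnu _ Gom _ L; split.
- move=> Hc; split.
  + move=> n x Hn Hx; rewrite /Vac -mapmN //.
    have := Hc n (mopp x) Hn; rewrite /Vac in Hx; rewrite Hx => H1.
    have := proj1 Gom n (mapm phi (mopp x)) Hn; lra.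
  + move=> n x Hn; rewrite /hnorm -mapmN //.
    have := Hc n x Hn; have := Hc n (mopp x) Hn.
    move=> H1 H2; apply: Rmax_lub.
    * apply: Rle_trans H2 _; apply: Rmax_l.
    * apply: Rle_trans H1 _; apply: Rmax_r.
- move=> [Hp Hcc] n x Hn.
  set S := fun r => exists p : Mat V n n, Vac nu p /\ r = hnorm nu (madd x p).
  have Sge : forall s, S s -> om n (mapm phi x) <= s.
    move=> s [p [Vp ->]].
    rewrite (@madd_split V W phi n x p L).
    have H1 := proj1 (proj2 Gom) n (mapm phi (madd x p)) (mapm phi (mopp p)) Hn.
    have H2 : om n (mapm phi (mopp p)) = 0 by rewrite mapmN //; exact: Hp.
    have H3 := Hcc n (madd x p) Hn.
    have H4 : om n (mapm phi (madd x p)) <= hnorm om (mapm phi (madd x p)) by apply: Rmax_l.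
    lra.
  have hge : forall p : Mat V n n, 0 <= hnorm nu p.
    move=> p; apply: Rle_trans (Rmax_l _ _); exact: (proj1 Gnu).
  have ex : exists m, is_glb S m.
    have [l Hl] : {l | is_lub (fun r => S (- r)) l}.
      apply: completeness.
      + exists 0 => r [p [_ Hr]]; have := hge (madd x p); lra.
      + exists (- hnorm nu (madd x (Z V n))); exists (Z V n); split.
        * by rewrite /Vac moppZ nuZ.
        * lra.
    exists (- l); split.
    + move=> s Ss; have : - s <= l.
        apply: (proj1 Hl); by rewrite Ropp_involutive.
      lra.
    + move=> b Hb; have : l <= - b.
        apply: (proj2 Hl) => r Sr; have := Hb _ Sr; lra.
      lra.
  have Hg := epsilon_spec (inhabits 0) (is_glb S) ex.
  rewrite /nu_max -/S; apply: (proj2 Hg); exact: Sge.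
Qed.
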